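(* Let $B$ be a real-valued standard Brownian motion with $B_0=0$. With probability one, there exists an integer $N\ge1$ such that for every $n\ge N$ and every integer $\ell\in[2^{n-1},2^n-n^{3/2}]$, at least one of the intervals $I_k=[\ell+k,\ell+k+1]$, for integers $k$ with $0\le k\le n^{3/2}-1$, satisfies $\mathrm{Osc}_{I_k}(B)>\log\log n$.
   Context: For a function $f:\mathbb R^+\to\mathbb R$ and an interval $I\subset\mathbb R^+$, $\mathrm{Osc}_I(f)=\sup_I f-\inf_I f$. *)

(* Defs.v *)
From HB Require Import structures.
From mathcomp Require Import all_boot all_order all_algebra.
From mathcomp Require Import all_classical all_reals all_analysis.
Set Implicit Arguments. Unset Strict Implicit. Unset Printing Implicit Defensive.
Import Order.TTheory GRing.Theory Num.Theory.
Import numFieldNormedType.Exports.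
Local Open Scope classical_set_scope.
Local Open Scope ring_scope.

Definition Osc {R : realType} (f : R -> R) (a b : R) : R :=
  sup [set f x | x in `[a, b]] - inf [set f x | x in `[a, b]].

(* Standard real Brownian motion B (time first, then sample point) on the
   probability space (T, P), time parameter t >= 0:
   - each B t is a random variable;
   - B 0 = 0 and every path t |-> B t w is continuous on [0, +oo);
   - for 0 <= s < t, B t - B s has law N(0, t - s)
     (normal_prob takes the standard deviation);
   - increments over consecutive disjoint intervals are mutually independent:
     for any 0 <= t_0 < t_1 < ... < t_n and Borel sets A_0,...,A_{n-1},
     P(forall i < n, B t_{i+1} - B t_i \in A_i) = prod_i P(B t_{i+1} - B t_i \in A_i). *)
Definition is_standard_BM {R : realType} {d : measure_display}
  {T : measurableType d} (P : probability T R) (B : R -> T -> R) : Prop :=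
  [/\ (forall t, 0 <= t -> measurable_fun setT (B t)),
      (forall w, B 0 w = 0),
      (forall w, {within `[0, +oo[, continuous (fun t => B t w)}),
      (forall s t, 0 <= s -> s < t -> forall A : set R, measurable A ->
          P [set w | B t w - B s w \in A] = normal_prob 0 (Num.sqrt (t - s)) A)
    & (forall (n : nat) (tt : nat -> R) (A : nat -> set R),
          0 <= tt 0%N -> (forall i, (i < n)%N -> tt i < tt i.+1) ->
          (forall i, measurable (A i)) ->
          P [set w | forall i, (i < n)%N -> B (tt i.+1) w - B (tt i) w \in A i]
          = \big[*%E/1%E]_(i < n)
              P [set w | B (tt i.+1) w - B (tt i) w \in A i])].

(* Main.v *)
Require Import Defs.
From HB Require Import structures.
From mathcomp Require Import all_boot all_order all_algebra.
From mathcomp Require Import all_classical all_reals all_analysis.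
From mathcomp Require Import lra zify measurable_realfun.
Set Implicit Arguments. Unset Strict Implicit. Unset Printing Implicit Defensive.
Import Order.TTheory GRing.Theory Num.Theory.
Import numFieldNormedType.Exports.
Local Open Scope classical_set_scope.
Local Open Scope ring_scope.

Section NumSec.
Variable R : realType.

Lemma num1 (x : R) : 625 <= x -> 22 <= x - (ln x + 1) ^+ 2.
Proof.
move=> hx.
have x0 : 0 < x by lra.
set s := Num.sqrt x.
have s0 : 0 < s by rewrite sqrtr_gt0.
set y := Num.sqrt s.
have y0 : 0 < y by rewrite sqrtr_gt0.
have ys : y ^+ 2 = s by rewrite sqr_sqrtr // ltW.
have sx : s ^+ 2 = x by rewrite sqr_sqrtr // ltW.
have xy : x = y ^+ 4 by rewrite -sx -ys -exprM.
have lnx : ln x = ln y *+ 4 by rewrite xy lnXn.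
have ly := ln_sublinear y0.
have lx0 : 0 < ln x by apply: ln_gt0; lra.
have y5 : 5 <= y.
  rewrite leNgt; apply/negP => hy.
  have : x < 625.
    rewrite xy.
    have h1 : y ^+ 2 < 25 by nra.
    have : y ^+ 4 = y ^+ 2 * y ^+ 2 by rewrite -exprD.
    move=> ->; nra.
  lra.
have hL : ln x < 4 * y by rewrite lnx -mulr_natl; lra.
rewrite {1}xy.
have hB : (ln x + 1) ^+ 2 <= (4 * y + 1) ^+ 2 by nra.
have e4 : y ^+ 4 = y ^+ 2 * y ^+ 2 by rewrite -exprD.
rewrite e4.
have h25 : 25 <= y ^+ 2 by nra.
have h3 : 25 * y ^+ 2 <= y ^+ 2 * y ^+ 2 by nra.
have h4 : (4 * y + 1) ^+ 2 + 22 <= 25 * y ^+ 2 by nra.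
lra.
Qed.


Definition cq (n : nat) : R := ln (ln (n%:R : R)).
Definition qq (n : nat) : R :=
  normal_peak 1 * expR (- (cq n + 1) ^+ 2 / (1 ^+ 2 *+ 2)).
Definition mm (n : nat) : nat := Num.truncn ((n%:R : R) `^ (3 / 2)).

Lemma peak_bounds : 3^-1 <= normal_peak (1 : R) <= 2^-1.
Proof.
rewrite /normal_peak expr1n mul1r.
have p4 : pi < 4 :> R by have := pihalf_lt2 R; lra.
have p2 : 2 <= pi :> R by exact: pi_ge2.
have s0 : 0 < Num.sqrt (pi *+ 2) :> R by rewrite sqrtr_gt0; lra.
have h3 : Num.sqrt (pi *+ 2) <= 3 :> R.
  have -> : 3 = Num.sqrt (3 ^+ 2) :> R by rewrite sqrtr_sqr ger0_norm.
  rewrite ler_sqrt; last by [].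
  rewrite -mulr_natr; lra.
have h2 : 2 <= Num.sqrt (pi *+ 2) :> R.
  have -> : 2 = Num.sqrt (2 ^+ 2) :> R by rewrite sqrtr_sqr ger0_norm.
  rewrite ler_sqrt; last by rewrite -mulr_natr; lra.
  rewrite -mulr_natr; lra.
apply/andP; split.
  by rewrite lef_pV2 // posrE.
by rewrite lef_pV2 // posrE.
Qed.

Lemma cq_ge0 n : expR 625 <= (n%:R : R) -> 625 <= ln (n%:R : R) /\ 0 <= cq n.
Proof.
move=> hn.
have n0 : 0 < (n%:R : R) by apply: lt_le_trans hn; exact: expR_gt0.
have h : 625 <= ln (n%:R : R).
  by rewrite -[625]expRK ler_ln // posrE expR_gt0.
split => //; rewrite /cq ltW // ln_gt0 //; lra.
Qed.

Lemma num2 n : expR 625 <= (n%:R : R) -> 4 <= qq n * Num.sqrt n%:R.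
Proof.
move=> hn.
have n0 : 0 < (n%:R : R) by apply: lt_le_trans hn; exact: expR_gt0.
have [hx hc] := cq_ge0 hn.
set x := ln (n%:R : R) in hx.
have h22 := num1 hx.
have hsq : Num.sqrt (n%:R : R) = expR (x / 2).
  have -> : (n%:R : R) = expR (x / 2) ^+ 2.
    by rewrite -expRM_natr divfK // lnK // posrE.
  by rewrite sqrtr_sqr ger0_norm // ltW // expR_gt0.
rewrite hsq /qq -mulrA -expRD.
have [p1 _] := andP peak_bounds.
have e := expR_ge1Dx (- (cq n + 1) ^+ 2 / (1 ^+ 2 *+ 2) + x / 2).
rewrite expr1n in e *.
have he : 12 <= expR (- (cq n + 1) ^+ 2 / (1 *+ 2) + x / 2).
  apply: le_trans e; rewrite /cq -/x -mulr_natr mul1r. lra.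
have : 3^-1 * 12 <= normal_peak 1 * expR (- (cq n + 1) ^+ 2 / (1 *+ 2) + x / 2).
  apply: ler_pM => //; lra.
lra.
Qed.


Lemma pow32 (a : R) : 0 < a -> a `^ (3 / 2) = a * Num.sqrt a.
Proof.
move=> a0.
have -> : (3 / 2 : R) = 1 + 2^-1 by lra.
rewrite powRD; last by apply/implyP => _; rewrite gt_eqF.
by rewrite powRr1 ?ltW // powR12_sqrt // ltW.
Qed.

Lemma num3 n : (1 <= n)%N ->
  ((mm n)%:R <= (n%:R : R) `^ (3 / 2)) /\ (n%:R * Num.sqrt n%:R - 1 <= ((mm n)%:R : R)).
Proof.
move=> n1.
have n0 : 0 < (n%:R : R) by rewrite ltr0n.
have := @truncn_itv R ((n%:R : R) `^ (3 / 2)) (powR_ge0 _ _).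
rewrite /mm => /andP [h1 h2]; split => //.
rewrite -pow32 //; move: h2; rewrite -natr1; lra.
Qed.

Lemma qq_bounds n : 0 <= qq n <= 1.
Proof.
have [p1 p2] := andP peak_bounds.
have e0 := expR_gt0 (- (cq n + 1) ^+ 2 / (1 ^+ 2 *+ 2)).
have e1 : expR (- (cq n + 1) ^+ 2 / (1 ^+ 2 *+ 2)) <= 1.
  rewrite expR_le1 expr1n mulNr oppr_le0 divr_ge0 ?sqr_ge0 //.
rewrite /qq; apply/andP; split.
  by rewrite mulr_ge0 ?normal_peak_ge0 // ltW.
have : normal_peak 1 * expR (- (cq n + 1) ^+ 2 / (1 ^+ 2 *+ 2)) <= 2^-1 * 1.
  by apply: ler_pM => //; try lra; rewrite ?normal_peak_ge0 ?ltW.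
lra.
Qed.

Lemma num4 n : expR 625 <= (n%:R : R) -> (1 <= n)%N ->
  3 * n%:R <= qq n * (mm n)%:R.
Proof.
move=> hn n1.
have h4 := num2 hn.
have [_ h3] := num3 n1.
have [q0 q1] := andP (qq_bounds n).
have nn : (1 : R) <= n%:R by rewrite ler1n.
have : qq n * (n%:R * Num.sqrt n%:R - 1) <= qq n * (mm n)%:R.
  by apply: ler_wpM2l.
have : 4 * n%:R <= qq n * Num.sqrt n%:R * n%:R :> R.
  by apply: ler_wpM2r => //; lra.
nra.
Qed.


Lemma normal_Bs (c : R) : 0 <= c ->
  ((normal_peak 1 * expR (- (c + 1) ^+ 2 / (1 ^+ 2 *+ 2)))%:E
    <= normal_prob 0 1 [set` `]c, (c + 1)%R]])%E.
Proof.
move=> c0.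
set q := normal_peak 1 * _.
have mBs : measurable [set` `]c, (c + 1)%R]] by [].
rewrite /normal_prob.
apply: (@le_trans _ _ (\int[lebesgue_measure]_(x in [set` `]c, (c + 1)%R]]) (cst q%:E x))%E).
  rewrite integral_cst //.
  have h1 : (lebesgue_measure [set` `]c, (c + 1)%R]] = 1)%E.
    rewrite lebesgue_measure_itv /= lte_fin ltrDl ltr01.
    by rewrite -EFinD addrAC subrr add0r.
  have e : forall y : \bar R, y = 1%E -> (q%:E <= q%:E * y)%E.
    by move=> y ->; rewrite mule1.
  apply: e; exact: h1.
apply: ge0_le_integral => //.
- move=> x _; rewrite lee_fin /q mulr_ge0 ?normal_peak_ge0 // ltW // expR_gt0.
- apply/measurable_EFinP/measurable_funTS; exact: measurable_normal_pdf.
- move=> x /=; rewrite in_itv /= => /andP [h1 h2].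
  rewrite lee_fin normal_pdfE ?oner_neq0 //= /q /normal_fun.
  apply: ler_wpM2l; first exact: normal_peak_ge0.
  rewrite ler_expR !expr1n !mulNr lerN2 ler_pM2r; last by rewrite invr_gt0.
  rewrite subr0; nra.
Qed.

Lemma normal_A_ub (c : R) : 0 <= c ->
  (normal_prob 0 1 [set` `[(- c)%R, c]] <=
    (1 - normal_peak 1 * expR (- (c + 1) ^+ 2 / (1 ^+ 2 *+ 2)))%:E)%E.
Proof.
move=> c0.
have mA : measurable [set` `[(- c)%R, c]] by [].
rewrite -[X in normal_prob 0 1 X]setCK probability_setC; last exact: measurableC.
rewrite EFinB; apply: leeB => //.
apply: le_trans (normal_Bs c0) _.
apply: le_measure; rewrite ?inE //; first exact: measurableC.
move=> x /=; rewrite !in_itv /= => /andP [h1 h2] /andP [h3 h4]; lra.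
Qed.


Lemma Osc_ge (f : R -> R) a b : 0 <= a -> a <= b ->
  {within `[0, +oo[, continuous f} -> `|f b - f a| <= Osc f a b.
Proof.
move=> a0 ab cf.
have cab : {within `[a, b], continuous f}.
  apply: continuous_subspaceW cf => x /=; rewrite !in_itv /= => /andP [h _].
  by rewrite andbT; apply: le_trans h.
have [cM _ hM] := EVT_max ab cab.
have [cm _ hm] := EVT_min ab cab.
set S := [set f x | x in `[a, b]].
have ub : has_ubound S by exists (f cM) => _ [x hx <-]; apply: hM; exact: hx.
have lb : has_lbound S by exists (f cm) => _ [x hx <-]; by apply: hm; exact: hx.
have aI : a \in `[a, b] by rewrite in_itv /= lexx ab.
have bI : b \in `[a, b] by rewrite in_itv /= lexx ab.
have Sa : S (f a) by exists a => //; exact: aI.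
have Sb : S (f b) by exists b => //; exact: bI.
have h1 := ub_le_sup ub Sa. have h2 := ub_le_sup ub Sb.
have h3 := ge_inf lb Sa. have h4 := ge_inf lb Sb.
rewrite /Osc -/S.
have [/ger0_norm -> | /ltr0_norm ->] := lerP 0 (f b - f a); lra.
Qed.

Lemma geom_bound n : (1 <= n)%N ->
  (2 ^ n)%:R * (2^-1) ^+ (3 * n) <= 1 / (2 ^ (n + 0.+1))%:R :> R.
Proof.
move=> n1.
rewrite addn1 div1r !natrX -exprVn.
have -> : (3 * n = n + 2 * n)%N by rewrite mulSn.
rewrite exprD mulrA -exprMn mulfV ?pnatr_eq0 // expr1n mul1r.
have h0 : (0 : R) <= 2^-1 by rewrite invr_ge0.
have h1 : (2 : R)^-1 <= 1 by rewrite invf_le1 ?ler1n.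
apply: (ler_wiXn2l h0 h1); lia.
Qed.

End NumSec.

Section Main.
Variables (R : realType) (d : measure_display) (T : measurableType d)
  (P : probability T R) (B : R -> T -> R).
Hypothesis hBM : is_standard_BM P B.

Definition tt (l i : nat) : R := ((l + i)%N)%:R.
Definition Aset (n : nat) : set R := [set` `[(- cq R n)%R, cq R n]].
Definition Ev (n l : nat) : set T := [set w | forall i, (i < mm R n)%N ->
  B (tt l i.+1) w - B (tt l i) w \in Aset n].
Definition N0 : nat := (Num.truncn (expR 625 : R)).+1.
Definition F (n : nat) : set T :=
  if (N0 <= n)%N then \bigcup_(l < 2 ^ n) Ev n l else set0.

Lemma tt_ge0 l i : 0 <= tt l i. Proof. exact: ler0n. Qed.
Lemma tt_lt l i : tt l i < tt l i.+1. Proof. by rewrite ltr_nat addnS. Qed.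
Lemma tt_diff l i : tt l i.+1 - tt l i = 1.
Proof. by rewrite /tt addnS -addn1 natrD addrAC subrr add0r. Qed.

Lemma mdiff s t (A : set R) : 0 <= s -> 0 <= t -> measurable A ->
  measurable [set w | B t w - B s w \in A].
Proof.
case: hBM => mB _ _ _ _ s0 t0 mA.
have mf : measurable_fun setT (fun w => B t w - B s w).
  by apply: measurable_funB; [exact: mB | exact: mB].
have := mf measurableT A mA; rewrite setTI.
suff -> : [set w | B t w - B s w \in A] = (fun w => B t w - B s w) @^-1` A by [].
by apply/seteqP; split => w /=; rewrite inE.
Qed.

Lemma mEv n l : measurable (Ev n l).
Proof.
have [m0|mpos] := posnP (mm R n).
  suff -> : Ev n l = setT by [].
  by apply/seteqP; split => w //= _ i; rewrite m0.
have -> : Ev n l = \bigcap_(i in `I_(mm R n)) [set w | B (tt l i.+1) w - B (tt l i) w \in Aset n].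
  by apply/seteqP; split => w /= h i hi; exact: h.
apply: bigcap_measurable.
  by exists 0%N.
by move=> k _; apply: mdiff; [exact: tt_ge0 | exact: tt_ge0 | exact: measurable_itv].
Qed.


Lemma PEv n l : expR 625 <= (n%:R : R) ->
  (P (Ev n l) <= ((2^-1) ^+ (3 * n))%:E)%E.
Proof.
move=> hn.
case: hBM => mB B0 cB law indep.
have mA : measurable (Aset n) by exact: measurable_itv.
have E := indep (mm R n) (tt l) (fun _ => Aset n) (tt_ge0 l 0)
  (fun i _ => tt_lt l i) (fun _ => mA).
have -> : P (Ev n l) = \big[*%E/1%E]_(i < mm R n)
    P [set w | B (tt l i.+1) w - B (tt l i) w \in Aset n] by exact: E.
rewrite (eq_bigr (fun _ => normal_prob 0 1 (Aset n))); last first.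
  by move=> i _; rewrite law ?tt_ge0 ?tt_lt // tt_diff sqrtr1.
have p0 : (0 <= normal_prob 0 1 (Aset n))%E by exact: measure_ge0.
have p1 : (normal_prob 0 1 (Aset n) <= 1)%E by exact: probability_le1.
have finA : normal_prob 0 1 (Aset n) \is a fin_num.
  by rewrite ge0_fin_numE // (le_lt_trans p1) // ltry.
have [_ hc] := cq_ge0 hn.
have hub := normal_A_ub hc.
rewrite -(fineK finA) in p0 hub *.
rewrite prodEFin prodr_const card_ord lee_fin.
rewrite lee_fin in p0 hub.
set p := fine _ in p0 hub *.
have [q0 q1] := andP (qq_bounds R n).
have n1 : (1 <= n)%N.
  rewrite lt0n; apply/negP => /eqP n0; move: hn; rewrite n0.
  by rewrite leNgt expR_gt0.
have h4 := num4 hn n1.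
apply: (@le_trans _ _ ((1 - qq R n) ^+ mm R n)).
  by apply: lerXn2r; rewrite ?nnegrE // subr_ge0.
apply: (@le_trans _ _ (expR (- qq R n) ^+ mm R n)).
  apply: lerXn2r; rewrite ?nnegrE ?subr_ge0 // ?expR_ge0 //.
  by have := expR_ge1Dx (- qq R n); rewrite addrC.
rewrite -expRM_natr.
apply: (@le_trans _ _ (expR (- 1) ^+ (3 * n))).
  rewrite -expRM_natr ler_expR natrM mulN1r mulNr lerN2.
  by rewrite /qq in h4 *; lra.
apply: lerXn2r; rewrite ?nnegrE ?invr_ge0 ?expR_ge0 //.
rewrite expRN lef_pV2 ?posrE ?expR_gt0 //.
by have := expR_ge1Dx (1 : R); lra.
Qed.


Lemma N0_le n : (N0 <= n)%N -> expR 625 <= (n%:R : R) /\ (1 <= n)%N.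
Proof.
move=> h; split; last by apply: leq_trans h.
apply: ltW; apply: lt_le_trans (truncnS_gt _) _.
by rewrite ler_nat.
Qed.

Lemma PF n : (P (F n) <= (1 / (2 ^ (n + 0.+1))%:R)%:E)%E.
Proof.
rewrite /F; case: ifP => h; last first.
  by rewrite measure0 lee_fin divr_ge0.
have [hn n1] := N0_le h.
rewrite bigcup_mkord.
apply: le_trans; first (apply: le_mu_bigsetU => i _; exact: mEv).
apply: le_trans; first (apply: lee_sum => i _; exact: (PEv i hn)).
rewrite sumEFin lee_fin sumr_const card_ord.
by have := geom_bound R n1; rewrite mulr_natl.
Qed.

Lemma sumF : (\sum_(0 <= n <oo) P (F n) < +oo)%E.
Proof.
apply: le_lt_trans (lee_nneseries (v := fun n => (1 / (2 ^ (n + 0.+1))%:R : R)%:E) _ _) _.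
- by move=> i _ _; exact: measure_ge0.
- by move=> i _; exact: PF.
have h := cvg_lim (@ereal_hausdorff R) (@cvg_geometric_eseries_half R 1 0).
have -> : (\sum_(0 <= i <oo) (1 / (2 ^ (i + 1))%:R : R)%:E = (1 / 2 ^+ 0 : R)%:E)%E.
  exact: h.
by rewrite ltry.
Qed.

End Main.

Unset Implicit Arguments.

Theorem lemma5 (R : realType) (d : measure_display) (T : measurableType d)
  (P : probability T R) (B : R -> T -> R) :
  is_standard_BM P B ->
  {ae P, forall w, exists N : nat, (1 <= N)%N /\
    forall n : nat, (N <= n)%N ->
    forall l : nat, (2 ^ n.-1 <= l)%N ->
      (l%:R : R) <= 2 ^+ n - n%:R `^ (3 / 2) ->
      exists k : nat, (k%:R : R) <= n%:R `^ (3 / 2) - 1 /\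
        ln (ln (n%:R : R)) < Osc (fun t => B t w) (l%:R + k%:R) (l%:R + k%:R + 1)}.
Proof.
move=> hBM.
have mF : forall k, measurable (F B k).
  move=> k; rewrite /F; case: ifP => _ //.
  by apply: bigcup_measurable => l _; exact: (mEv hBM).
have P0 := lim_sup_set_cvg0 mF (sumF hBM).
exists (lim_sup_set (F B)); split => //.
  by apply: bigcap_measurable => [|k _]; [exists 0%N | exact: bigcup_measurable].
move=> w /= nQ; apply: contrapT => nL; apply: nQ.
have [K HK] : exists K, forall j, (K <= j)%N -> ~ F B j w.
  apply: contrapT => hne; apply: nL => K _.
  apply: contrapT => hn; apply: hne; exists K => j hj Fj; apply: hn; exists j => //.
have [_ _ cB _ _] := hBM.
exists (maxn K (N0 R)); split; first by rewrite leq_max /N0 orbT.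
move=> n; rewrite geq_max => /andP [Kn N0n] l _ hl.
have [hn n1] := N0_le N0n.
have nF := HK n Kn; rewrite /F N0n in nF.
have n0 : (0 : R) < n%:R by rewrite ltr0n.
have pw0 : 0 < (n%:R : R) `^ (3 / 2) by rewrite powR_gt0.
have l2 : (l < 2 ^ n)%N.
  by rewrite -(ltr_nat R) natrX; lra.
have nE : ~ Ev B n l w by move=> h; apply: nF; exists l.
have [i [hi hA]] : exists i, (i < mm R n)%N /\
    ~ (B (tt R l i.+1) w - B (tt R l i) w \in Aset n).
  apply: contrapT => hne; apply: nE => i hi; apply: contrapT => hA; apply: hne.
  by exists i.
exists i; split.
  have [h3 _] := num3 R n1.
  have : (i.+1%:R : R) <= (mm R n)%:R by rewrite ler_nat.
  rewrite -addn1 natrD; lra.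
have e1 : tt R l i.+1 = l%:R + i%:R + 1 by rewrite /tt addnS -addn1 !natrD.
have e0 : tt R l i = l%:R + i%:R by rewrite /tt natrD.
have hab : (l%:R + i%:R : R) <= l%:R + i%:R + 1 by rewrite lerDl.
have hO := Osc_ge (addr_ge0 (ler0n _ l) (ler0n _ i)) hab (cB w).
rewrite -e1 -e0 /= in hO.
set x := B (tt R l i.+1) w - B (tt R l i) w in hA hO.
have hx : ~ ((- cq R n <= x) && (x <= cq R n)).
  by move=> h; apply: hA; rewrite /Aset in_setE /= in_itv /= h.
rewrite -e1 -e0; apply: lt_le_trans hO.
rewrite -/(cq R n).
have [_ hc] := cq_ge0 hn.
have [x0|x0] := lerP 0 x; [rewrite ger0_norm // | rewrite ltr0_norm //];
  rewrite ltNge; apply/negP => h; apply: hx; apply/andP; split; lra.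
Qed.
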